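(* Let $F/\mathbb{Q}$ be a totally real number field of degree $n$ with ring of integers $R$, and let $H=\left(\frac{a,b}{F}\right)$, with $a,b\in R\setminus\{0\}$, be a quaternion $F$-algebra which is a division algebra and satisfies $H\otimes_{\mathbb{Q}}\mathbb{R}\cong\mathrm{M}(2,\mathbb{R})\times\mathbb{H}^{n-1}$. Then any Fuchsian code associated to the natural order $R[1,I,J,K]$ has code rate at least $3n$.
   Context: $H=\left(\frac{a,b}{F}\right)$ is the $F$-algebra with basis $1,I,J,K$ and relations $I^2=a$, $J^2=b$, $K=IJ=-JI$, with reduced norm $\mathrm{N}(x+yI+zJ+tK)=x^2-ay^2-bz^2+abt^2$; $\mathbb{H}$ denotes Hamilton's quaternions. The natural order is $\mathcal{O}=R+RI+RJ+RK$ (an $R$-order since $a,b\in R$). Viewing $F\subset\mathbb{R}$ via an embedding with $a>0$, let $\phi(x+yI+zJ+tK)=\begin{pmatrix} x+y\sqrt a & z+t\sqrt a\\ b(z-t\sqrt a) & x-y\sqrt a\end{pmatrix}$ and $\Gamma=\phi(\mathcal{O}^*_+)$, where $\mathcal{O}^*_+$ is the group of units of $\mathcal{O}$ with positive reduced norm; $\Gamma$ acts on the upper half-plane $\mathcal{H}$ by Möbius transformations. A fundamental domain for $\Gamma$ is a closed hyperbolic polygon $\mathcal{F}\subset\mathcal{H}$ such that no two distinct interior points are $\Gamma$-equivalent (and only $\pm\mathrm{Id}$ fixes an interior point) and every point of $\mathcal{H}$ is $\Gamma$-equivalent to a point of $\mathcal{F}$. A Fuchsian code associated to $\Gamma$ is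 $\mathcal{C}=\{\pm g(\tau): g\in S\}\subset\mathbb{C}$ for a fundamental domain $\mathcal{F}$, a finite set $S\subset\Gamma$ and an interior point $\tau$ of $\mathcal{F}$. Code rate: fix a $\mathbb{Z}$-basis $\theta_1=1,\dots,\theta_n$ of $R$, write $x=\sum_k x_k\theta_k$, and similarly $y,z,t$ with indeterminate integer coordinates $y_k,z_k,t_k$; then $x^2-ay^2-bz^2+abt^2=\sum_{k=1}^n g_k\theta_k$ with $g_k\in\mathbb{Z}[x_1,\dots,t_n]$. The algebraic set $A(\Gamma)\subset\mathbb{C}^{4n}$ is defined by $g_1=1$, $g_k=0$ ($2\le k\le n$), and the code rate of a Fuchsian code attached to $\Gamma$ is $\dim A(\Gamma)$. *)

(* Defs.v *)
From HB Require Import structures.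
From mathcomp Require Import all_boot all_order all_algebra all_field.
From mathcomp Require Import complex.
From mathcomp Require Import mpoly.
From Stdlib Require Import Rdefinitions.
From mathcomp Require Import Rstruct.

Set Implicit Arguments.
Unset Strict Implicit.
Unset Printing Implicit Defensive.
Import Order.TTheory GRing.Theory Num.Theory.
Local Open Scope ring_scope.

(* Quaternion algebras (a,b / K) on the basis 1, I, J, K:              *)
(*   I^2 = a, J^2 = b, K = IJ = -JI.                                  *)
Record quat (K : Type) := Quat { q1 : K; qI : K; qJ : K; qK : K }.

Definition qzero (K : comNzRingType) : quat K := Quat 0 0 0 0.
Definition qone (K : comNzRingType) : quat K := Quat 1 0 0 0.
Definition qadd (K : comNzRingType) (u v : quat K) : quat K :=
  Quat (q1 u + q1 v) (qI u + qI v) (qJ u + qJ v) (qK u + qK v).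
Definition qscale (K : comNzRingType) (c : K) (u : quat K) : quat K :=
  Quat (c * q1 u) (c * qI u) (c * qJ u) (c * qK u).
Definition qmul (K : comNzRingType) (a b : K) (u v : quat K) : quat K :=
  let: Quat x1 y1 z1 t1 := u in
  let: Quat x2 y2 z2 t2 := v in
  Quat (x1 * x2 + a * y1 * y2 + b * z1 * z2 - a * b * t1 * t2)
       (x1 * y2 + y1 * x2 + b * t1 * z2 - b * z1 * t2)
       (x1 * z2 + z1 * x2 + a * y1 * t2 - a * t1 * y2)
       (x1 * t2 + t1 * x2 + y1 * z2 - z1 * y2).

Definition quat_division (K : comNzRingType) (a b : K) : Prop :=
  forall u : quat K, u <> qzero K ->
    exists v : quat K, qmul a b u v = qone K /\ qmul a b v u = qone K.

Definition real_quat_iso_M2 (al be : R) : Prop :=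
  exists f : quat R -> 'M[R]_2,
    [/\ bijective f,
        forall u v, f (qadd u v) = f u + f v,
        forall c u, f (qscale c u) = c *: f u,
        forall u v, f (qmul al be u v) = f u *m f v
      & f (qone R) = 1%:M].

Definition real_quat_iso_Hamilton (al be : R) : Prop :=
  exists f : quat R -> quat R,
    [/\ bijective f,
        forall u v, f (qadd u v) = qadd (f u) (f v),
        forall c u, f (qscale c u) = qscale c (f u),
        forall u v, f (qmul al be u v) = qmul (-1) (-1) (f u) (f v)
      & f (qone R) = qone R].

Definition ring_of_integers (F : fieldType) (x : F) : Prop :=
  exists p : {poly int}, p \is monic /\ root (map_poly intr p) x.

Definition Zbasis_of_integers (F : fieldType) (n : nat) (theta : 'I_n -> F) :
  Prop :=
  [/\ forall i, ring_of_integers (theta i),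
      forall r, ring_of_integers r ->
        exists c : 'I_n -> int, r = \sum_(i < n) (c i)%:~R * theta i
    & forall c : 'I_n -> int,
        \sum_(i < n) (c i)%:~R * theta i = 0 -> forall i, c i = 0].

Definition totally_real (F : fieldType) : Prop :=
  forall (sigma : {rmorphism F -> R[i]}) (x : F), Im (sigma x) = 0.

Definition CC := R[i].

Definition zariski_closed (N : nat) (Z : ('I_N -> CC) -> Prop) : Prop :=
  exists P : {mpoly CC[N]} -> Prop,
    forall v, Z v <-> (forall p, P p -> p.@[v] = 0).

Definition zariski_irreducible (N : nat) (Z : ('I_N -> CC) -> Prop) : Prop :=
  [/\ zariski_closed Z, exists v, Z v &
      forall Z1 Z2 : ('I_N -> CC) -> Prop,
        zariski_closed Z1 -> zariski_closed Z2 ->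
        (forall v, Z v -> Z1 v \/ Z2 v) ->
        (forall v, Z v -> Z1 v) \/ (forall v, Z v -> Z2 v)].

(* dim V >= d : there is a chain Z_0 < Z_1 < ... < Z_d of irreducible
   closed subsets of V (V an algebraic set; Krull/topological dimension). *)
Definition alg_dim_ge (N : nat) (V : ('I_N -> CC) -> Prop) (d : nat) : Prop :=
  exists Z : nat -> ('I_N -> CC) -> Prop,
    [/\ forall i, leq i d -> zariski_irreducible (Z i),
        forall i, leq i d -> forall v, Z i v -> V v,
        forall i, leq i.+1 d -> forall v, Z i v -> Z i.+1 v
      & forall i, leq i.+1 d -> exists v, Z i.+1 v /\ ~ Z i v].

(* variable index: coordinate block c (0 = x, 1 = y, 2 = z, 3 = t),
   position i; so the variables are x_i, y_i, z_i, t_i in 'I_(4*n). *)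
Definition qvar (n : nat) (c : 'I_4) (i : 'I_n) : 'I_(4 * n) := mxvec_index c i.

Definition generic_coord (F : fieldType) (n : nat) (theta : 'I_n -> F)
  (c : 'I_4) : {mpoly F[4 * n]} :=
  \sum_(i < n) 'X_(qvar c i) * (theta i)%:MP.

Definition generic_norm (F : fieldType) (n : nat) (theta : 'I_n -> F)
  (a b : F) : {mpoly F[4 * n]} :=
  let X c := generic_coord theta c in
  X 0 ^+ 2 - a%:MP * X 1 ^+ 2 - b%:MP * X 2 ^+ 2 + (a * b)%:MP * X 3 ^+ 2.

Definition norm_components (F : fieldType) (n : nat) (theta : 'I_n -> F)
  (a b : F) (g : 'I_n -> {mpoly int[4 * n]}) : Prop :=
  \sum_(k < n) map_mpoly intr (g k) * (theta k)%:MP = generic_norm theta a b.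

Definition A_Gamma (n : nat) (g : 'I_n -> {mpoly int[4 * n]})
  : ('I_(4 * n) -> CC) -> Prop :=
  fun v => forall k : 'I_n,
    (map_mpoly intr (g k)).@[v] = (if (val k == O)%N then 1 else 0).

(* Main.v *)
Require Import Defs.
From HB Require Import structures.
From mathcomp Require Import all_boot all_order all_algebra all_field.
From mathcomp Require Import complex.
From mathcomp Require Import mpoly.
From Stdlib Require Import Rdefinitions.
From mathcomp Require Import Rstruct.
From mathcomp Require Import ring.
From Stdlib Require Import Classical FunctionalExtensionality.
Import Order.TTheory GRing.Theory Num.Theory.
Local Open Scope ring_scope.
Set Implicit Arguments.
Unset Strict Implicit.
Unset Printing Implicit Defensive.
From mathcomp Require Import zify.
Section AG.

Definition polyfun (m : nat) (f : ('I_m -> CC) -> CC) :=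
  exists q : {mpoly CC[m]}, forall u, f u = q.@[u].

Lemma polyfun_ext m (f g : ('I_m -> CC) -> CC) :
  (forall u, f u = g u) -> polyfun f -> polyfun g.
Proof. by move=> e [q hq]; exists q => u; rewrite -e. Qed.

Lemma polyfun_const m c : polyfun (fun _ : 'I_m -> CC => c).
Proof. by exists c%:MP => u; rewrite mevalC. Qed.

Lemma polyfun_proj m (k : 'I_m) : polyfun (fun u => u k).
Proof. by exists 'X_k => u; rewrite mevalXU. Qed.

Lemma polyfun_add m (f g : ('I_m -> CC) -> CC) :
  polyfun f -> polyfun g -> polyfun (fun u => f u + g u).
Proof. by move=> [p hp] [q hq]; exists (p + q) => u; rewrite mevalD hp hq. Qed.

Lemma polyfun_mul m (f g : ('I_m -> CC) -> CC) :
  polyfun f -> polyfun g -> polyfun (fun u => f u * g u).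
Proof. by move=> [p hp] [q hq]; exists (p * q) => u; rewrite mevalM hp hq. Qed.

Lemma polyfun_sum m (I : finType) (f : I -> ('I_m -> CC) -> CC) :
  (forall i, polyfun (f i)) -> polyfun (fun u => \sum_i f i u).
Proof.
move=> h; have [Q hQ] := fin_all_exists h.
exists (\sum_i Q i) => u; rewrite raddf_sum /=; apply: eq_bigr => i _; exact: hQ.
Qed.

Lemma polyfun_comp m N (phi : ('I_m -> CC) -> ('I_N -> CC)) (p : {mpoly CC[N]}) :
  (forall l, polyfun (fun u => phi u l)) -> polyfun (fun u => p.@[phi u]).
Proof.
move=> h; have [Q hQ] := fin_all_exists h.
exists (p \mPo [tuple Q l | l < N]) => u.
rewrite comp_mpoly_meval; apply: meval_eq => l; by rewrite tnth_mktuple hQ.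
Qed.

Lemma line_poly m (q : {mpoly CC[m]}) (u1 u2 : 'I_m -> CC) :
  exists P : {poly CC}, forall t,
    q.@[fun k => u1 k + t * (u2 k - u1 k)] = P.[t].
Proof.
exists (\sum_(mm <- msupp q) (q@_mm)%:P *
   \prod_(i < m) ((u1 i)%:P + 'X * (u2 i - u1 i)%:P) ^+ mm i) => t.
rewrite mevalE horner_sum; apply: eq_bigr => mm _.
rewrite hornerM hornerC horner_prod; congr (_ * _); apply: eq_bigr => i _.
by rewrite horner_exp hornerD hornerM hornerX !hornerC.
Qed.

Lemma poly_nonroot (P : {poly CC}) : P != 0 -> exists t, P.[t] != 0.
Proof.
move=> nz; apply: NNPP => hn.
have hall : forall t, P.[t] = 0.
  by move=> t; apply: NNPP => ht; apply: hn; exists t; apply/eqP.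
pose rs := [seq (i%:R : CC) | i <- iota 0 (size P)].
have hu : uniq rs.
  rewrite map_inj_uniq ?iota_uniq // => i j /eqP; rewrite eqr_nat => /eqP //.
have ha : all (root P) rs by apply/allP => x _; apply/rootP.
by have := max_poly_roots nz ha hu; rewrite size_map size_iota ltnn.
Qed.

Definition closure m N (phi : ('I_m -> CC) -> ('I_N -> CC)) : ('I_N -> CC) -> Prop :=
  fun v => forall p : {mpoly CC[N]}, (forall u, p.@[phi u] = 0) -> p.@[v] = 0.

Lemma closure_img m N (phi : ('I_m -> CC) -> ('I_N -> CC)) u : closure phi (phi u).
Proof. by move=> p; apply. Qed.

Lemma closure_irr m N (phi : ('I_m -> CC) -> ('I_N -> CC)) :
  (forall l, polyfun (fun u => phi u l)) -> zariski_irreducible (closure phi).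
Proof.
move=> hphi; split.
- by exists (fun p => forall u, p.@[phi u] = 0) => v.
- by exists (phi (fun _ => 0)); apply: (@closure_img _ _ phi).
move=> Z1 Z2 [P1 hP1] [P2 hP2] hcov.
case: (classic (forall v, closure phi v -> Z1 v)) => [h|h1]; [by left|right].
move=> v2 hv2; apply: NNPP => nz2; apply: h1 => v1 hv1; apply: NNPP => nz1.
have [p1 [Pp1 np1]] : exists p1, P1 p1 /\ p1.@[v1] <> 0.
  apply: NNPP => H; apply: nz1; apply/hP1 => p Pp; apply: NNPP => hp.
  by apply: H; exists p.
have [p2 [Pp2 np2]] : exists p2, P2 p2 /\ p2.@[v2] <> 0.
  apply: NNPP => H; apply: nz2; apply/hP2 => p Pp; apply: NNPP => hp.
  by apply: H; exists p.
have [w1 hw1] : exists u, p1.@[phi u] <> 0.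
  by apply: NNPP => H; apply: np1; apply: hv1 => u; apply: NNPP => hu; apply: H; exists u.
have [w2 hw2] : exists u, p2.@[phi u] <> 0.
  by apply: NNPP => H; apply: np2; apply: hv2 => u; apply: NNPP => hu; apply: H; exists u.
have [q1 hq1] := polyfun_comp p1 hphi.
have [q2 hq2] := polyfun_comp p2 hphi.
have [L1 hL1] := line_poly q1 w1 w2.
have [L2 hL2] := line_poly q2 w1 w2.
have e0 : forall (q : {mpoly CC[m]}), q.@[fun k => w1 k + 0 * (w2 k - w1 k)] = q.@[w1].
  by move=> q; apply: meval_eq => k; rewrite mul0r addr0.
have e1 : forall (q : {mpoly CC[m]}), q.@[fun k => w1 k + 1 * (w2 k - w1 k)] = q.@[w2].
  by move=> q; apply: meval_eq => k; rewrite mul1r addrC subrK.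
have nL1 : L1 != 0.
  by apply/eqP => L0; apply: hw1; rewrite hq1 -e0 hL1 L0 horner0.
have nL2 : L2 != 0.
  by apply/eqP => L0; apply: hw2; rewrite hq2 -e1 hL2 L0 horner0.
have [t ht] := poly_nonroot (mulf_neq0 nL1 nL2).
rewrite hornerM mulf_eq0 negb_or in ht; case/andP: ht => ht1 ht2.
set w := fun k => w1 k + t * (w2 k - w1 k).
case: (hcov _ (@closure_img _ _ phi w)) => hz.
- move/hP1: hz => /(_ p1 Pp1); rewrite hq1 hL1 => /eqP; by rewrite (negPf ht1).
- move/hP2: hz => /(_ p2 Pp2); rewrite hq2 hL2 => /eqP; by rewrite (negPf ht2).
Qed.

End AG.
Definition act m (i : nat) (u : 'I_m -> CC) : 'I_m -> CC :=
  fun k => if leq (nat_of_ord k).+1 i then u k else 0.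

Lemma polyfun_act m i (k : 'I_m) : polyfun (fun u => act i u k).
Proof.
rewrite /act; case: (leq _ _); [exact: polyfun_proj | exact: polyfun_const].
Qed.

Lemma chain_lemma N m (V : ('I_N -> CC) -> Prop) (phi : ('I_m -> CC) -> ('I_N -> CC)) :
  (forall l, polyfun (fun u => phi u l)) ->
  zariski_closed V ->
  (forall u, V (phi u)) ->
  (forall i, leq i.+1 m -> exists p : {mpoly CC[N]},
       (forall u, p.@[phi (act i u)] = 0) /\ p.@[phi (act i.+1 (fun _ => 1))] <> 0) ->
  alg_dim_ge V m.
Proof.
move=> hphi [P hP] hV hsep.
exists (fun i => closure (fun u => phi (act i u))); split.
- move=> i _; apply: closure_irr => l.
  have [Q hQ] := hphi l.
  apply: (@polyfun_ext _ (fun u => Q.@[act i u])); first by move=> u; rewrite hQ.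
  by apply: (polyfun_comp Q (phi := act i)) => k; apply: polyfun_act.
- move=> i _ v hv; apply/hP => p Pp; apply: hv => u.
  by move/hP: (hV (act i u)) => /(_ p Pp).
- move=> i _ v hv p hp; apply: hv => u.
  have -> : act i u = act i.+1 (act i u).
    apply: functional_extensionality => k; rewrite /act.
    case: (ltnP k i) => hk; last by case: ifP.
    by rewrite ltnS (ltnW hk).
  exact: hp.
- move=> i hi; exists (phi (act i.+1 (fun _ => 1))); split.
    exact: (@closure_img _ _ (fun u => phi (act i.+1 u))).
  move=> hz; have [p [hp1 hp2]] := hsep i hi; apply: hp2; exact: hz.
Qed.
Definition Lc (F : fieldExtType rat) n (sigma : {rmorphism F -> CC}) (theta : 'I_n -> F)
  (c : 'I_4) (v : 'I_(4 * n) -> CC) : CC :=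
  \sum_(i < n) v (qvar c i) * sigma (theta i).

Lemma rmorph_mpoly_eq N (h1 h2 : {rmorphism {mpoly int[N]} -> CC}) :
  (forall i, h1 'X_i = h2 'X_i) -> forall p, h1 p = h2 p.
Proof.
move=> hX p; rewrite (mpolyE p) !rmorph_sum; apply: eq_bigr => m _.
rewrite -!mul_mpolyC !rmorphM; congr (_ * _).
  by rewrite -[p@_m]intz !rmorph_int.
rewrite mpolyXE_id !rmorph_prod; apply: eq_bigr => i _; by rewrite !rmorphXn hX.
Qed.

Lemma norm_h (F : fieldExtType rat) n (sigma : {rmorphism F -> CC}) (theta : 'I_n -> F)
  (a b : F) (v : 'I_(4 * n) -> CC) (h : {rmorphism {mpoly F[4 * n]} -> CC})
  (hC : forall c, h c%:MP = sigma c) (hX : forall i, h 'X_i = v i) :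
  h (generic_norm theta a b) =
  Lc sigma theta 0 v ^+ 2 - sigma a * Lc sigma theta 1 v ^+ 2
  - sigma b * Lc sigma theta 2 v ^+ 2 + sigma a * sigma b * Lc sigma theta 3 v ^+ 2.
Proof.
have hco : forall c, h (generic_coord theta c) = Lc sigma theta c v.
  move=> c; rewrite /generic_coord /Lc rmorph_sum; apply: eq_bigr => i _.
  by rewrite rmorphM hC hX.
rewrite /generic_norm /=.
by rewrite rmorphD !rmorphB !(rmorphM h) !hC !hco -!expr2 rmorphM.
Qed.
Lemma norm_eval (F : fieldExtType rat) n (sigma : {rmorphism F -> CC}) (theta : 'I_n -> F)
  (a b : F) (g : 'I_n -> {mpoly int[4 * n]}) (hg : norm_components theta a b g)
  (v : 'I_(4 * n) -> CC) :
  \sum_(k < n) (map_mpoly intr (g k)).@[v] * sigma (theta k) =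
  Lc sigma theta 0 v ^+ 2 - sigma a * Lc sigma theta 1 v ^+ 2
  - sigma b * Lc sigma theta 2 v ^+ 2 + sigma a * sigma b * Lc sigma theta 3 v ^+ 2.
Proof.
pose h : {rmorphism {mpoly F[4 * n]} -> CC} := mmap sigma v.
have hC : forall c, h c%:MP = sigma c by move=> c; exact: mmapC.
have hX : forall i, h 'X_i = v i by move=> i; rewrite /h /= mmapX mmap1U.
rewrite -(norm_h theta a b hC hX) -hg rmorph_sum; apply: eq_bigr => k _.
rewrite rmorphM hC; congr (_ * _).
pose h1 : {rmorphism {mpoly int[4 * n]} -> CC} := (h \o map_mpoly intr).
pose h2 : {rmorphism {mpoly int[4 * n]} -> CC} := (meval v \o map_mpoly intr).
have hX12 : forall i, h2 'X_i = h1 'X_i.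
  move=> i; rewrite /h1 /h2 /=.
  rewrite !map_mpolyX mevalXU; exact: (esym (hX i)).
exact: (rmorph_mpoly_eq hX12 (g k)).
Qed.
Lemma pidx_lt n (j : 'I_n) (e : 'I_3) : (j * 3 + e < n * 3)%nat.
Proof. have := ltn_ord j; have := ltn_ord e; lia. Qed.
Definition pidx n (j : 'I_n) (e : 'I_3) : 'I_(n * 3) := Ordinal (pidx_lt j e).
Definition e0 : 'I_3 := @Ordinal 3 0 isT.
Definition e1 : 'I_3 := @Ordinal 3 1 isT.
Definition e2 : 'I_3 := @Ordinal 3 2 isT.

Section Param.
Variables (n : nat) (s B : 'I_n -> CC).

Definition pp (j : 'I_n) (u : 'I_(n * 3) -> CC) := u (pidx j e0).
Definition qq (j : 'I_n) (u : 'I_(n * 3) -> CC) := u (pidx j e1).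
Definition rr (j : 'I_n) (u : 'I_(n * 3) -> CC) := u (pidx j e2).
Definition al j u := 1 + pp j u * qq j u.
Definition be j u := pp j u + rr j u + pp j u * qq j u * rr j u.
Definition ga j u := qq j u.
Definition de j u := 1 + qq j u * rr j u.

Definition ww (c : 'I_4) (j : 'I_n) (u : 'I_(n * 3) -> CC) : CC :=
  match nat_of_ord c with
  | 0 => (al j u + de j u) / 2
  | 1 => (al j u - de j u) / (2 * s j)
  | 2 => (be j u + ga j u / B j) / 2
  | _ => (be j u - ga j u / B j) / (2 * s j)
  end.

Lemma polyfun_sub m (f g : ('I_m -> CC) -> CC) :
  polyfun f -> polyfun g -> polyfun (fun u => f u - g u).
Proof. by move=> [p hp] [q hq]; exists (p - q) => u; rewrite mevalB hp hq. Qed.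

Lemma polyfun_ww c j : polyfun (ww c j).
Proof.
have hpp := polyfun_proj (pidx j e0).
have hqq := polyfun_proj (pidx j e1).
have hrr := polyfun_proj (pidx j e2).
have hal : polyfun (al j) by apply: polyfun_add; [apply: polyfun_const | apply: polyfun_mul].
have hde : polyfun (de j) by apply: polyfun_add; [apply: polyfun_const | apply: polyfun_mul].
have hga : polyfun (ga j) by [].
have hbe : polyfun (be j).
  by apply: polyfun_add; [apply: polyfun_add | apply: polyfun_mul; [apply: polyfun_mul|]].
rewrite /ww; case: (nat_of_ord c) => [|[|[|k]]].
- by apply: polyfun_mul; [apply: polyfun_add | apply: polyfun_const].
- by apply: polyfun_mul; [apply: polyfun_sub | apply: polyfun_const].
- apply: polyfun_mul; [apply: polyfun_add | apply: polyfun_const] => //.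
  by apply: polyfun_mul => //; apply: polyfun_const.
- apply: polyfun_mul; [apply: polyfun_sub | apply: polyfun_const] => //.
  by apply: polyfun_mul => //; apply: polyfun_const.
Qed.

End Param.
Lemma prim_data (F : fieldExtType rat) n (hdeg : \dim (fullv : {vspace F}) = n) :
  exists (z : F) (m0 : {poly rat}),
   [/\ fullv = <<1; z>>%VS, m0 \is monic, size m0 = n.+1,
       separable_poly m0 & (map_poly (in_alg F) m0).[z] = 0 /\
       forall P : {poly rat}, (map_poly (in_alg F) P).[z] = 0 -> m0 %| P].
Proof.
have pchF : [pchar F] =i pred0.
  by move=> p; rewrite (pchar_lalg F) pchar_num.
have sepF : separable 1 {:F}%AS.
  by apply/separableP => y _; apply: pcharf0_separable.
pose z := separable_generator 1 {:F}%AS.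
have Ez : fullv = <<1; z>>%VS := eq_adjoin_separable_generator sepF (sub1v _).
have [m0 Dm0] := polyOver1P (minPolyOver 1 z).
exists z, m0; split => //.
- by rewrite -(map_monic (in_alg F)) -Dm0 monic_minPoly.
- rewrite -(size_map_poly (in_alg F)) -Dm0 size_minPoly adjoin_degreeE.
  by rewrite -Ez dimv1 divn1 hdeg.
- rewrite -(separable_map (in_alg F)) -Dm0.
  by have := pcharf0_separable 1%AS pchF z.
split; first by rewrite -Dm0 minPolyxx.
  move=> P hP; rewrite -(dvdp_map (in_alg F)) -Dm0.
  by apply: minPoly_dvdp; [apply: alg_polyOver | apply/rootP].
Qed.
Lemma roots_data (m0 : {poly rat}) n : m0 \is monic -> size m0 = n.+1 ->
  separable_poly m0 ->
  exists rs : seq CC, [/\ size rs = n, uniq rs &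
     forall r, r \in rs -> root (map_poly (ratr : rat -> CC) m0) r].
Proof.
move=> mon sz sep.
have [rs Drs] := closed_field_poly_normal (map_poly (ratr : rat -> CC) m0).
have lc : lead_coef (map_poly (ratr : rat -> CC) m0) = 1.
  by rewrite lead_coef_map (monicP mon) rmorph1.
rewrite lc scale1r in Drs.
exists rs; split.
- have := size_prod_XsubC rs id; rewrite -Drs size_map_poly sz.
  by move=> [].
- by rewrite -separable_prod_XsubC -Drs separable_map.
- by move=> r hr; rewrite Drs root_prod_XsubC.
Qed.
Lemma embed_root (F : fieldExtType rat) (z : F) (m0 : {poly rat})
  (Ez : fullv = <<1; z>>%VS)
  (hker : forall P : {poly rat}, (map_poly (in_alg F) P).[z] = 0 -> m0 %| P)
  (r : CC) (hr : root (map_poly (ratr : rat -> CC) m0) r) :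
  exists sigma : {rmorphism F -> CC},
    forall P : {poly rat}, sigma ((map_poly (in_alg F) P).[z]) = (map_poly ratr P).[r].
Proof.
have hpre : forall y : F, exists P : {poly rat}, y == (map_poly (in_alg F) P).[z].
  move=> y; have /Fadjoin1_polyP [P eP] : y \in <<1; z>>%VS by rewrite -Ez memvf.
  by exists P; apply/eqP.
pose pre y := xchoose (hpre y).
have epre : forall y, y = (map_poly (in_alg F) (pre y)).[z].
  by move=> y; apply/eqP; exact: (xchooseP (hpre y)).
pose f y := (map_poly (ratr : rat -> CC) (pre y)).[r].
have key : forall P, f ((map_poly (in_alg F) P).[z]) = (map_poly ratr P).[r].
  move=> P; set y := (map_poly (in_alg F) P).[z].
  have : m0 %| P - pre y.
    by apply: hker; rewrite raddfB /= hornerD hornerN -epre subrr.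
  case/dvdpP => D eD.
  have : (map_poly (ratr : rat -> CC) (P - pre y)).[r] = 0.
    by rewrite eD rmorphM /= hornerM (rootP hr) mulr0.
  by rewrite raddfB /= hornerD hornerN => /eqP; rewrite subr_eq0 => /eqP ->.
have fz : zmod_morphism f.
  move=> x y; rewrite {1}(epre x) {1}(epre y) -hornerN -hornerD -raddfN -raddfD /=.
  by rewrite key raddfB /= hornerD hornerN.
have fm : monoid_morphism f.
  split.
    have := key 1; rewrite !rmorph1 !hornerC => <-; done.
  move=> x y; rewrite {1}(epre x) {1}(epre y) -hornerM -rmorphM /=.
  by rewrite key rmorphM /= hornerM.
pose faM := GRing.isZmodMorphism.Build F CC f fz.
pose fmM := GRing.isMonoidMorphism.Build F CC f fm.
pose fRM : {rmorphism F -> CC} := HB.pack f faM fmM.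
by exists fRM => P; exact: key.
Qed.
Lemma free_rat (F : fieldExtType rat) n (theta : 'I_n -> F)
  (hfree : forall c : 'I_n -> int, \sum_(i < n) (c i)%:~R * theta i = 0 -> forall i, c i = 0) :
  forall c : 'I_n -> rat, \sum_(i < n) c i *: theta i = 0 -> forall i, c i = 0.
Proof.
move=> c hc i.
pose d k := denq (c k); pose D := \prod_k d k.
pose c' k := numq (c k) * \prod_(l | l != k) d l.
have ec' : forall k, ((c' k)%:~R : rat) = D%:~R * c k.
  move=> k; rewrite /c' /D [in RHS](bigD1 k) //=.
  rewrite !intrM numqE /d; ring.
have hint : forall (k : int) (x : F), (k%:~R : F) * x = ((k%:~R : rat) *: x).
  by move=> k x; rewrite scaler_int mulrzl.
have hs : \sum_(k < n) (c' k)%:~R * theta k = 0.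
  under eq_bigr => k _ do rewrite hint ec' -scalerA.
  by rewrite -scaler_sumr hc scaler0.
have := hfree _ hs i; rewrite /c' => /eqP; rewrite mulf_eq0 => /orP [].
  by rewrite numq_eq0 => /eqP.
move=> /eqP h; exfalso; move: h; apply/eqP/prodf_neq0 => l _.
by rewrite /d denq_neq0.
Qed.
Lemma embeddings (F : fieldExtType rat) n (hdeg : \dim (fullv : {vspace F}) = n)
  (theta : 'I_n -> F)
  (hfree : forall c : 'I_n -> int, \sum_(i < n) (c i)%:~R * theta i = 0 -> forall i, c i = 0) :
  exists sigma : 'I_n -> {rmorphism F -> CC},
    (\matrix_(j, k) sigma j (theta k)) \in unitmx.
Proof.
have [z [m0 [Ez mon sz sep [m0z hker]]]] := prim_data hdeg.
have [rs [srs urs hrs]] := roots_data mon sz sep.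
pose r (j : 'I_n) := rs`_j.
have hr : forall j, root (map_poly (ratr : rat -> CC) m0) (r j).
  by move=> j; apply: hrs; rewrite mem_nth // srs.
have [sigma hsig] := fin_all_exists (fun j => embed_root Ez hker (hr j)).
exists sigma.
have hP : forall k, exists P : {poly rat}, leq (size P) n /\ theta k = (map_poly (in_alg F) P).[z].
  move=> k; have /Fadjoin1_polyP [P eP] : theta k \in <<1; z>>%VS by rewrite -Ez memvf.
  exists (P %% m0); split.
    by rewrite -ltnS -sz ltn_modp monic_neq0.
  rewrite eP {1}(divp_eq P m0) rmorphD rmorphM /= hornerD hornerM m0z mulr0 add0r //.
have [P hP'] := fin_all_exists hP.
pose T := \matrix_(l < n, k < n) (P k)`_l : 'M[rat]_n.
pose Vd := \matrix_(j < n, l < n) (r j) ^+ l : 'M[CC]_n.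
have eM : \matrix_(j, k) sigma j (theta k) = Vd *m map_mx ratr T.
  apply/matrixP => j k; rewrite !mxE (proj2 (hP' k)) hsig.
  rewrite (@horner_coef_wide _ n) ?size_map_poly ?(proj1 (hP' k)) //.
  by apply: eq_bigr => l _; rewrite !mxE coef_map mulrC.
have dV : \det Vd != 0.
  have -> : Vd = (Vandermonde n (\row_j r j))^T.
    by apply/matrixP => j l; rewrite !mxE.
  rewrite det_tr det_Vandermonde; apply/prodf_neq0 => i _; apply/prodf_neq0 => j hij.
  rewrite !mxE subr_eq0 /r nth_uniq ?srs //.
  by apply/eqP => eji; move: hij; rewrite eji ltnn.
have dT : \det T != 0.
  rewrite -det_tr; apply/det0P => [[v nv hv]]; apply: (negP nv).
  have hs : \sum_(k < n) v 0 k *: theta k = 0.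
    have eth : forall k, theta k = \sum_(l < n) (P k)`_l *: z ^+ l.
      move=> k; rewrite (proj2 (hP' k)) (@horner_coef_wide _ n) ?size_map_poly ?(proj1 (hP' k)) //.
      by apply: eq_bigr => l _; rewrite coef_map mulr_algl.
    under eq_bigr => k _ do rewrite eth scaler_sumr.
    rewrite exchange_big /= big1 // => l _.
    have : (v *m T^T) 0 l = 0 by rewrite hv mxE.
    rewrite mxE => hl.
    under eq_bigr => k _ do rewrite scalerA.
    rewrite -scaler_suml; move: hl.
    under eq_bigr => k _ do rewrite !mxE.
    by move=> ->; rewrite scale0r.
  apply/eqP/matrixP => i k; rewrite mxE (ord1 i).
  exact: (free_rat hfree hs k).
rewrite eM unitmxE unitfE det_mulmx det_map_mx mulf_neq0 // fmorph_eq0 //.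
Qed.
Lemma main_aux (F : fieldExtType rat) n (sigma : 'I_n -> {rmorphism F -> CC}) (theta : 'I_n -> F)
  (a b : F) (ha0 : a != 0) (hb0 : b != 0)
  (hM : (\matrix_(j, k) sigma j (theta k)) \in unitmx)
  (htheta1 : forall i : 'I_n, val i = O -> theta i = 1)
  (g : 'I_n -> {mpoly int[4 * n]}) (hg : norm_components theta a b g) :
  alg_dim_ge (A_Gamma g) (n * 3).
Proof.
pose M := \matrix_(j, k) sigma j (theta k) : 'M[CC]_n.
pose Mi := invmx M.
pose A j := sigma j a; pose Bj j := sigma j b; pose s j := sqrtC (A j).
have hs : forall j, s j ^+ 2 = A j by move=> j; rewrite sqrtCK.
have hA0 : forall j, A j != 0 by move=> j; rewrite fmorph_eq0.
have hB0 : forall j, Bj j != 0 by move=> j; rewrite fmorph_eq0.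
have hs0 : forall j, s j != 0 by move=> j; rewrite sqrtC_eq0.
have h20 : (2 : CC) != 0 by rewrite pnatr_eq0.
pose W u : 'M[CC]_(4, n) := \matrix_(c, j) ww s Bj c j u.
pose phi u : 'I_(4 * n) -> CC := fun l => mxvec (W u *m Mi^T) 0 l.
have key : forall u j c, Lc (sigma j) theta c (phi u) = ww s Bj c j u.
  move=> u j c.
  have e1 : W u c j = ww s Bj c j u by rewrite mxE.
  have e2 : ((W u *m Mi^T) *m M^T) c j = W u c j.
    by rewrite -mulmxA -trmx_mul mulmxV // trmx1 mulmx1.
  rewrite -e1 -e2 mxE /Lc; apply: eq_bigr => i _.
  by rewrite /phi /qvar mxvecE !mxE.
have w0 : forall j u, ww s Bj 0 j u = (al j u + de j u) / 2 by [].
have w1 : forall j u, ww s Bj 1 j u = (al j u - de j u) / (2 * s j) by [].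
have w2 : forall j u, ww s Bj 2 j u = (be j u + ga j u / Bj j) / 2 by [].
have w3 : forall j u, ww s Bj 3 j u = (be j u - ga j u / Bj j) / (2 * s j) by [].
have hnorm : forall u j, \sum_(k < n) (map_mpoly intr (g k)).@[phi u] * sigma j (theta k) = 1.
  move=> u j; rewrite (norm_eval (sigma j) hg (phi u)) !key w0 w1 w2 w3.
  rewrite -/(A j) -/(Bj j) /al /de /be /ga -(hs j).
  move: (s j) (hs0 j) (Bj j) (hB0 j) => sj hsj bj hbj.
  field.
  by rewrite ?hsj ?hbj ?h20.
have inA : forall v, (forall j, \sum_(k < n) (map_mpoly intr (g k)).@[v] * sigma j (theta k) = 1) ->
    A_Gamma g v.
  move=> v hv.
  pose e : 'cV[CC]_n := \col_k ((map_mpoly intr (g k)).@[v] - (if (val k == O) then 1 else 0)).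
  have Me : M *m e = 0.
    apply/matrixP => j i; rewrite (ord1 i) [RHS]mxE mxE.
    have n0 : (0 < n)%nat by apply: (leq_ltn_trans _ (ltn_ord j)).
    have hd : \sum_(k < n) M j k * (if (val k == O) then 1 else 0) = 1.
      rewrite (bigD1 (Ordinal n0)) //= big1 ?addr0.
        by rewrite mxE /= htheta1 // rmorph1 mulr1.
      move=> k hk; case: eqP => hk0; last by rewrite mulr0.
      by exfalso; move: hk; rewrite -val_eqE /= hk0 eqxx.
    under eq_bigr => k _ do rewrite [e _ _]mxE mulrBr.
    rewrite sumrB hd; apply/eqP; rewrite subr_eq0 -[X in _ == X](hv j); apply/eqP.
    by apply: eq_bigr => k _; rewrite mxE mulrC.
  have e0 : e = 0 by rewrite -(mulKmx hM e) Me mulmx0.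
  move=> k; apply/eqP; rewrite -subr_eq0.
  have := congr1 (fun m : 'cV[CC]_n => m k 0) e0; rewrite !mxE => ->; done.
have hLp : forall c j v,
    (\sum_(i < n) 'X_(qvar c i) * (sigma j (theta i))%:MP : {mpoly CC[4 * n]}).@[v]
    = Lc (sigma j) theta c v.
  move=> c j v; rewrite raddf_sum /= /Lc; apply: eq_bigr => i _.
  by rewrite mevalM mevalXU mevalC.
apply: (@chain_lemma (4 * n) (n * 3) (A_Gamma g) phi).
- move=> l; case/mxvec_indexP: l => c i.
  apply: (@polyfun_ext _ (fun u => \sum_j ww s Bj c j u * Mi i j)).
    by move=> u; rewrite /phi mxvecE !mxE; apply: eq_bigr => j _; rewrite !mxE.
  apply: polyfun_sum => j; apply: polyfun_mul; [apply: polyfun_ww | apply: polyfun_const].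
- exists (fun p => exists k, p = map_mpoly intr (g k) - (if (val k == O) then 1 else 0)%:MP).
  move=> v; split.
    by move=> hv p [k ->]; rewrite mevalB mevalC hv subrr.
  move=> hv k; apply/eqP; rewrite -subr_eq0.
  by have := hv _ (ex_intro _ k erefl); rewrite mevalB mevalC => ->.
- by move=> u; apply: inA => j; apply: hnorm.
move=> i hi.
have [j [e [he ->]]] : exists (j : 'I_n) (e : nat), (e < 3)%nat /\ i = (j * 3 + e)%nat.
  have hj : (i %/ 3 < n)%nat by rewrite ltn_divLR.
  by exists (Ordinal hj), (i %% 3)%nat; split; [rewrite ltn_mod | rewrite /= -divn_eq].
have actv : forall e' u, act (j * 3 + e) u (pidx j e') =
    if (e' < e)%nat then u (pidx j e') else 0.
  move=> e' u; rewrite /act /=.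
  by case: ifP => h1; case: ifP => h2 //; exfalso; move: h1 h2; lia.
have actv' : forall e' u, act (j * 3 + e).+1 u (pidx j e') =
    if (e' < e.+1)%nat then u (pidx j e') else 0.
  move=> e' u; rewrite /act /=.
  by case: ifP => h1; case: ifP => h2 //; exfalso; move: h1 h2; lia.
pose Lp c := (\sum_(i < n) 'X_(qvar c i) * (sigma j (theta i))%:MP : {mpoly CC[4 * n]}).
case: e he actv actv' => [|[|[|e]]] he actv actv' //.
+ exists (Lp 2 + (s j)%:MP * Lp 3).
  have ev : forall u, (Lp 2 + (s j)%:MP * Lp 3).@[phi u] = be j u.
    move=> u; rewrite mevalD mevalM mevalC !hLp !key w2 w3.
    move: (s j) (hs0 j) (Bj j) (hB0 j) => sj hsj bj hbj; field.
    by rewrite ?hsj ?hbj ?h20.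
  split => [u|]; rewrite ev /be /pp /qq /rr !(actv, actv') /e0 /e1 /e2 /=.
    by rewrite !(mul0r, mulr0, addr0, add0r).
  by rewrite !(mul0r, mulr0, addr0, add0r); apply/eqP; rewrite oner_eq0.
+ exists ((Bj j)%:MP * (Lp 2 - (s j)%:MP * Lp 3)).
  have ev : forall u, ((Bj j)%:MP * (Lp 2 - (s j)%:MP * Lp 3)).@[phi u] = ga j u.
    move=> u; rewrite mevalM mevalB mevalM !mevalC !hLp !key w2 w3.
    move: (s j) (hs0 j) (Bj j) (hB0 j) => sj hsj bj hbj; field.
    by rewrite ?hsj ?hbj ?h20.
  split => [u|]; rewrite ev /ga /qq !(actv, actv') /e0 /e1 /e2 /=.
    by [].
  by apply/eqP; rewrite oner_eq0.
+ exists (Lp 0 - (s j)%:MP * Lp 1 - 1).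
  have ev : forall u, (Lp 0 - (s j)%:MP * Lp 1 - 1).@[phi u] = de j u - 1.
    move=> u; rewrite !mevalB mevalM mevalC meval1 !hLp !key w0 w1.
    move: (s j) (hs0 j) (Bj j) (hB0 j) => sj hsj bj hbj; field.
    by rewrite ?hsj ?hbj ?h20.
  split => [u|]; rewrite ev /de /qq /rr !(actv, actv') /e0 /e1 /e2 /=.
    by rewrite mulr0 addr0 subrr.
  by rewrite mulr1 addrK; apply/eqP; rewrite oner_eq0.
Qed.

Theorem mainTheorem2 (n : nat) (F : fieldExtType rat)
  (hdeg : \dim (fullv : {vspace F}) = n)
  (htr : totally_real F)
  (a b : F) (ha : ring_of_integers a) (hb : ring_of_integers b)
  (ha0 : a != 0) (hb0 : b != 0)
  (hdiv : quat_division a b)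
  (hram : exists sigma0 : {rmorphism F -> R},
      real_quat_iso_M2 (sigma0 a) (sigma0 b) /\
      forall sigma : {rmorphism F -> R},
        (exists x : F, sigma x <> sigma0 x) ->
        real_quat_iso_Hamilton (sigma a) (sigma b))
  (theta : 'I_n -> F) (htheta : Zbasis_of_integers theta)
  (htheta1 : forall i : 'I_n, val i = O -> theta i = 1)
  (g : 'I_n -> {mpoly int[4 * n]}) (hg : norm_components theta a b g) :
  alg_dim_ge (A_Gamma g) (3 * n).
Proof.
have [_ _ hfree] := htheta.
have [sigma hM] := embeddings hdeg hfree.
have -> : (3 * n = n * 3)%nat by rewrite mulnC.
exact: (main_aux ha0 hb0 hM htheta1 hg).
Qed.
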